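(* Let $G$ be a chordal graph, $X\subsetneq V(G)$ a clique, and $L_1,\dots,L_t$ the evaporation sequence of $G$ with exception set $X$. If $G\setminus X$ is connected and $X\subseteq N(L_t)$, then $X\cup L_t$ is a clique.
   Context: A vertex is simplicial if its neighborhood is a clique. For a chordal graph $G$ and a clique $X\subseteq V(G)$ (possibly empty), the evaporation sequence of $G$ with exception set $X$ is defined recursively: if $X=V(G)$ it is the empty sequence; otherwise let $L_1$ be the set of simplicial vertices of $G$ that are not in $X$ (this set is always nonempty), and the evaporation sequence is $L_1$ followed by the evaporation sequence of $G-L_1$ with exception set $X$. For $S\subseteq V(G)$, $N(S)$ denotes the set of vertices not in $S$ that are adjacent to some vertex of $S$. *)

(* Defs.v *)
(* A simple graph is a symmetric irreflexive relation e on a finType T;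
   V(G) = T. Induced subgraphs are represented by vertex sets S : {set T}. *)
From mathcomp Require Import all_boot.
Set Implicit Arguments. Unset Strict Implicit. Unset Printing Implicit Defensive.

Section Graphs.
Variables (T : finType) (e : rel T).

Definition simple_graph : Prop := symmetric e /\ irreflexive e.

Definition is_clique (K : {set T}) : Prop :=
  {in K &, forall u v, u != v -> e u v}.

(* chordal: G has no induced cycle of length >= 4, i.e. there is no sequence
   c of >= 4 distinct vertices whose adjacencies are exactly the
   cyclically consecutive pairs *)
Definition chordal : Prop :=
  ~ exists (x0 : T) (c : seq T),
      [/\ 4 <= size c, uniq c &
        forall i j, i < size c -> j < size c ->
          e (nth x0 c i) (nth x0 c j) =
            (j == i.+1 %% size c) || (i == j.+1 %% size c) ].

Definition nbhd_in (S : {set T}) (v : T) : {set T} := [set u in S | e v u].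

Definition is_cliqueb (K : {set T}) : bool :=
  [forall u in K, forall w in K, (u != w) ==> e u w].

Definition simplicial_in (S : {set T}) (v : T) : bool :=
  (v \in S) && is_cliqueb (nbhd_in S v).

(* L_1 for the graph G[S] with exception set X: simplicial vertices of G[S] not in X *)
Definition evap_layer (S X : {set T}) : {set T} :=
  [set v in S :\: X | simplicial_in S v ].

Inductive is_evap (X : {set T}) : {set T} -> seq {set T} -> Prop :=
  | evap_nil S : S = X -> is_evap X S [::]
  | evap_cons S Ls : S != X -> is_evap X (S :\: evap_layer S X) Ls ->
      is_evap X S (evap_layer S X :: Ls).

Definition nbhd_set (S : {set T}) : {set T} :=
  [set v | (v \notin S) && [exists u in S, e u v]].

Definition connected_minus (X : {set T}) : Prop :=
  forall u v, u \notin X -> v \notin X ->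
    connect [rel x y | [&& e x y, x \notin X & y \notin X]] u v.
End Graphs.

(* Main.v *)
Require Import Defs.
From mathcomp Require Import all_boot.
Set Implicit Arguments. Unset Strict Implicit. Unset Printing Implicit Defensive.

Section Proof.
Variables (T : finType) (e : rel T) (X : {set T}).
Hypothesis esym : symmetric e.

Definition RR (S : {set T}) : rel T :=
  [rel x y | [&& e x y, x \in S, y \in S, x \notin X & y \notin X]].

Lemma simpl_adj S v a b : simplicial_in e S v -> a \in S -> b \in S ->
  e v a -> e v b -> a != b -> e a b.
Proof.
case/andP=> _ /forallP H aS bS va vb ab.
have /implyP := H a. rewrite /nbhd_in inE aS va => /(_ isT) /forallP /(_ b) /implyP.
rewrite inE bS vb => /(_ isT) /implyP; exact.
Qed.

Lemma connect_inv (r : rel T) (D : pred T) x y :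
  (forall a b, D a -> r a b -> D b) -> connect r x y -> D x -> D y.
Proof.
move=> H /connectP [p pth ->]; elim: p x pth => [|z p IH] x //= /andP [rxz pz] Dx.
exact: IH pz (H _ _ Dx rxz).
Qed.

Lemma connR S u a : connect (RR S) u a -> u \in S -> u \notin X -> (a \in S) && (a \notin X).
Proof.
move=> c uS uX; apply: (connect_inv (D := [pred w | (w \in S) && (w \notin X)])) c _.
  by move=> x y _ /and5P [_ _ yS _ yX]; rewrite /= yS yX.
by rewrite /= uS uX.
Qed.

Lemma step S u v : let S' := S :\: evap_layer e S X in
  u \in S' -> u \notin X -> v \in S' -> v \notin X ->
  connect (RR S) u v -> connect (RR S') u v.
Proof.
move=> S' uS uX vS vX C.
set L1 := evap_layer e S X.
pose D := [pred w | [&& w \in S, w \notin X &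
   connect (RR S') u w || (w \in L1) && [exists z, [&& z \in S', z \notin X, connect (RR S') u z & e w z]]]].
have sub : S' \subset S by rewrite subsetDl.
have Hcase1 : forall w w', connect (RR S') u w -> e w w' -> w' \in S -> w' \notin X -> D w'.
  move=> w w' cw ww' w'S w'X.
  have /andP [wS wX] := connR cw uS uX.
  rewrite inE /= w'S w'X /=.
  case: (boolP (w' \in L1)) => w'L.
  - apply/orP; right; apply/existsP; exists w; by rewrite wS wX cw /= esym.
  - apply/orP; left; apply: connect_trans cw (connect1 _).
    by rewrite /RR /= ww' wS wX w'X andbT /S' in_setD w'L w'S.
have : D v.
  apply: (connect_inv _ C); last first.
    by rewrite inE /= uX connect0 (subsetP sub _ uS).
  move=> a b /and3P [aS aX /orP [ca | /andP [aL /existsP [z /and4P [zS zX cz ez]]]]]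
    /and5P [eab _ bS _ bX].
  - exact: Hcase1 ca eab bS bX.
  - case: (eqVneq z b) => [<-|zb].
      by rewrite inE /= (subsetP sub _ zS) zX cz.
    have sa : simplicial_in e S a by move: aL; rewrite /L1 /evap_layer inE => /andP [].
    apply: (Hcase1 _ _ cz _ bS bX).
    exact: simpl_adj sa (subsetP sub _ zS) bS ez eab zb.
case/and3P => _ _ /orP [//|/andP [vL _]].
by move: vS; rewrite /S' in_setD vL.
Qed.

Lemma chain S Ls : is_evap e X S Ls -> Ls != [::] ->
  exists S0 : {set T}, [/\ S0 \subset S, last set0 Ls = evap_layer e S0 X,
    S0 :\: evap_layer e S0 X = X &
    forall u v, u \in S0 -> u \notin X -> v \in S0 -> v \notin X ->
      connect (RR S) u v -> connect (RR S0) u v].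
Proof.
elim=> [S0 _ //| S1 Ls' neq ev IH _].
case: Ls' ev IH => [|L Ls'] ev IH.
- exists S1; split => //.
  by inversion ev.
- have [S0 [sub lastE fin conn]] := IH isT.
  exists S0; split => //.
  + exact: subset_trans sub (subsetDl _ _).
  + move=> u v uS uX vS vX C; apply: conn => //.
    apply: step => //; exact: (subsetP sub).
Qed.
End Proof.

Theorem mainTheorem6 (T : finType) (e : rel T) (X : {set T}) (Ls : seq {set T}) :
  simple_graph e -> chordal e ->
  is_clique e X -> X \proper [set: T] ->
  is_evap e X [set: T] Ls ->
  connected_minus e X ->
  X \subset nbhd_set e (last set0 Ls) ->
  is_clique e (X :|: last set0 Ls).
Proof.
move=> [esym eirr] _ Xcl Xprop ev conn Xsub.
have Lsne : Ls != [::].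
  apply/eqP => Ls0; move: ev; rewrite Ls0 => ev.
  have E : [set: T] = X by inversion ev.
  by move: Xprop; rewrite E properE subxx.
have [S0 [_ lastE fin C]] := chain esym ev Lsne.
rewrite lastE in Xsub *.
set L := evap_layer e S0 X in fin Xsub *.
have LS : forall l, l \in L -> [/\ l \in S0, l \notin X & simplicial_in e S0 l].
  move=> l; rewrite /L /evap_layer inE in_setD => /andP [/andP [lX lS] sl]; by split.
have XS : X \subset S0 by rewrite -{1}fin subsetDl.
have SL : forall v, v \in S0 -> v \notin X -> v \in L.
  move=> v vS vX; apply: contraNT vX => vL; by rewrite -fin in_setD vL vS.
have LL : forall l l', l \in L -> l' \in L -> l != l' -> e l l'.
  move=> l l' lL l'L ll'.
  have [lS lX _] := LS _ lL; have [l'S l'X _] := LS _ l'L.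
  have c : connect (RR e X S0) l l'.
    apply: C => //.
    have -> : connect (RR e X [set: T]) l l' =
              connect [rel x y | [&& e x y, x \notin X & y \notin X]] l l'.
      by apply: eq_connect => x y; rewrite /RR /= !in_setT.
    exact: conn.
  have : (l' \in L) && ((l' == l) || e l l').
    apply: (connect_inv (D := [pred w | (w \in L) && ((w == l) || e l w)])) c _; last by rewrite /= lL eqxx.
    move=> a b /andP [aL /orP [/eqP al | la]] /and5P [ab _ bS _ bX];
      rewrite /= (SL _ bS bX) /=.
      by rewrite -al ab orbT.
    have [<-|lb] := eqVneq l b; first by [].
    have [_ _ sa] := LS _ aL.
    by rewrite (simpl_adj sa lS bS _ ab lb) ?orbT // esym.
  by rewrite eq_sym (negbTE ll') /= => /andP [].
have XL : forall x l, x \in X -> l \in L -> e l x.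
  move=> x l xX lL.
  have := subsetP Xsub _ xX; rewrite inE => /andP [_ /existsP [u /andP [uL ux]]].
  case: (eqVneq u l) => [<-//|ul].
  have [_ _ su] := LS _ uL; have [lS lX _] := LS _ lL.
  apply: (simpl_adj su lS (subsetP XS _ xX)) => //; first by rewrite esym LL // eq_sym.
  by apply: contraNneq lX => ->.
move=> a b; rewrite !in_setU => /orP [aX|aL] /orP [bX|bL] ab.
- exact: Xcl.
- by rewrite esym XL.
- exact: XL.
- exact: LL.
Qed.
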